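(* Let $(Z,d)$ be a distance space, $X\cup Y=Z$ a cover, and $A:=X\cap Y$. Assume $A$ is nonempty and that for every $x\in X\setminus A$, $y\in Y\setminus A$ and $v\in A$ one has $d(x,y)\ge d(x,v)$ and $d(x,y)\ge d(y,v)$. Assume moreover that for every $x\in X\setminus A$ and $y\in Y\setminus A$ one has $d(x,y)\ge\mathrm{diam}(A)$. Then $\mathrm{VR}_r(X)\cup\mathrm{VR}_r(Y)\hookrightarrow\mathrm{VR}_r(Z)$ is a weak equivalence for all $r\in[0,\infty)$.
   Context: A distance on a set $Z$ is a function $d\colon Z\times Z\to[0,\infty]$ with $d(x,y)=d(y,x)$ and $d(x,x)=0$ (no triangle inequality assumed). $\mathrm{diam}(A)$ is the supremum of $d(a,b)$ over $a,b\in A$ (the maximum for finite $A$). For $B\subset Z$ and $r\in[0,\infty)$, $\mathrm{VR}_r(B)$ is the simplicial complex of all finite nonempty $\sigma\subset B$ with $d(x,y)\le r$ for all $x,y\in\sigma$. Homotopical notions refer to geometric realizations. *)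

(* Defs.v *)
From mathcomp Require Import all_boot all_order all_algebra.
From mathcomp Require Import all_classical all_reals.
From mathcomp Require Import ereal.
From Stdlib Require List.
Import Order.TTheory GRing.Theory Num.Theory.

Set Implicit Arguments.
Unset Strict Implicit.
Unset Printing Implicit Defensive.

Local Open Scope classical_set_scope.
Local Open Scope ring_scope.

Section Defs.
Variable R : realType.

Definition is_distance (Z : Type) (d : Z -> Z -> \bar R) : Prop :=
  (forall x y, (0 <= d x y)%E) /\ (forall x y, d x y = d y x) /\
  (forall x, d x x = 0%E).

Definition diam (Z : Type) (d : Z -> Z -> \bar R) (A : set Z) : \bar R :=
  ereal_sup [set d a b | a in A & b in A].

Definition VR (Z : Type) (d : Z -> Z -> \bar R) (r : R) (B : set Z) : set (set Z) :=
  [set s | finite_set s /\ s !=set0 /\ s `<=` B /\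
           (forall x y, s x -> s y -> (d x y <= r%:E)%E)].

(** Geometric realization: points are functions Z -> R, nonnegative, whose
    support is a simplex of K, with coordinates summing to 1. *)
Definition supp (Z : Type) (f : Z -> R) : set Z := [set z | f z != 0].

Definition is_point (Z : Type) (K : set (set Z)) (f : Z -> R) : Prop :=
  (forall z, 0 <= f z) /\ K (supp f) /\ (exists2 s : seq Z,
     List.NoDup s /\ (forall z, supp f z <-> List.In z s) &
     \sum_(z <- s) f z = 1).

(** Weak (coherent) topology on |K|: U is open iff its trace on each closed
    simplex |s| (s in K) is open for the Euclidean topology of |s|. *)
Definition openK (Z : Type) (K : set (set Z)) (U : set (Z -> R)) : Prop :=
  (forall f, U f -> is_point K f) /\
  forall s, K s -> forall f, U f -> supp f `<=` s ->
    exists2 e : R, 0 < e &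
      forall g, is_point K g -> supp g `<=` s ->
        (forall z, s z -> `|g z - f z| < e) -> U g.

Definition contK (I : finType) (D : set (I -> R)) (Z : Type)
    (K : set (set Z)) (g : (I -> R) -> (Z -> R)) : Prop :=
  (forall p, D p -> is_point K (g p)) /\
  forall U, openK K U -> forall p, D p -> U (g p) ->
    exists2 e : R, 0 < e &
      forall q, D q -> (forall i, `|q i - p i| < e) -> U (g q).

Definition cube (I : finType) : set (I -> R) :=
  [set p | forall i, 0 <= p i <= 1].
Definition bdry (I : finType) : set (I -> R) :=
  [set p | exists i, p i = 0 \/ p i = 1].

Definition sph_map (n : nat) (Z : Type) (K : set (set Z)) (x : Z -> R)
    (g : ('I_n -> R) -> (Z -> R)) : Prop :=
  contK (@cube 'I_n) K g /\ forall p, cube p -> bdry p -> g p = x.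

Definition tcoord (n : nat) (t : R) (p : 'I_n -> R) : option 'I_n -> R :=
  fun o => match o with None => t | Some i => p i end.

Definition homot_rel (n : nat) (Z : Type) (K : set (set Z)) (x : Z -> R)
    (g0 g1 : ('I_n -> R) -> (Z -> R)) : Prop :=
  exists H : (option 'I_n -> R) -> (Z -> R),
    [/\ contK (@cube (option 'I_n)) K H,
        forall p, cube p -> H (tcoord 0 p) = g0 p,
        forall p, cube p -> H (tcoord 1 p) = g1 p &
        forall p t, cube p -> bdry p -> 0 <= t <= 1 -> H (tcoord t p) = x].

(** The inclusion |L| -> |K| (L a subcomplex of K) is a weak equivalence:
    it induces a bijection pi_n(|L|, x) -> pi_n(|K|, x) for all n and all
    base points x of |L| (for n = 0: bijection on path components, no base
    point needed), where pi_n(X,x) = homotopy classes of maps (I^n, dI^n) ->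
    (X, x) rel dI^n. *)
Definition weak_equiv_incl (Z : Type) (L K : set (set Z)) : Prop :=
  forall (n : nat) (x : Z -> R), (n = 0%N \/ is_point L x) ->
    (forall g : ('I_n -> R) -> (Z -> R), sph_map K x g ->
       exists2 g', sph_map L x g' & homot_rel K x g g') /\
    (forall g0 g1 : ('I_n -> R) -> (Z -> R), sph_map L x g0 -> sph_map L x g1 ->
       homot_rel K x g0 g1 -> homot_rel L x g0 g1).

End Defs.

(* Main.v *)
From HB Require Import structures.
Require Import Defs.
From mathcomp Require Import all_boot all_order all_algebra.
From mathcomp Require Import all_classical all_reals.
From mathcomp Require Import ereal.
From mathcomp Require Import ring lra.
From Stdlib Require List.
Import Order.TTheory GRing.Theory Num.Theory.
Local Open Scope classical_set_scope.
Local Open Scope ring_scope.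

Set Implicit Arguments.
Unset Strict Implicit.
Unset Printing Implicit Defensive.

Section Gen.
Variable R : realType.
Variable Z : Type.
HB.instance Definition _ := gen_eqMixin Z.
HB.instance Definition _ := gen_choiceMixin Z.

Lemma InP (l : seq Z) z : List.In z l <-> z \in l.
Proof.
elim: l => [|a l IH] //=; rewrite inE; split.
- by case=> [->|/IH ->]; rewrite ?eqxx ?orbT.
- by case/orP=> [/eqP ->|/IH]; [left|right].
Qed.

Lemma uniq_NoDup (l : seq Z) : uniq l <-> List.NoDup l.
Proof.
elim: l => [|a l IH] /=; first by split => // _; constructor.
split.
- by case/andP=> na /IH ul; constructor => // /InP; rewrite (negbTE na).
- by move=> H; inversion H; subst; apply/andP; split; [apply/negP => /InP|apply/IH].
Qed.

Lemma sum_filter_nz (l : seq Z) (h : Z -> R) :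
  \sum_(z <- [seq z <- l | h z != 0]) h z = \sum_(z <- l) h z.
Proof.
rewrite big_filter big_mkcond /=; apply: eq_bigr => z _.
by case: eqP => // ->.
Qed.

Lemma sum_cover (l1 l2 : seq Z) (h : Z -> R) : uniq l1 -> uniq l2 ->
  (forall z, h z != 0 -> z \in l1) -> (forall z, h z != 0 -> z \in l2) ->
  \sum_(z <- l1) h z = \sum_(z <- l2) h z.
Proof.
move=> u1 u2 c1 c2; rewrite -sum_filter_nz -[RHS]sum_filter_nz.
apply: perm_big; apply: uniq_perm; rewrite ?filter_uniq //.
by move=> z; rewrite !mem_filter; case: (boolP (h z != 0)) => //= /[dup] /c1 -> /c2 ->.
Qed.

Lemma is_pointE (K : set (set Z)) (f : Z -> R) :
  is_point K f <-> (forall z, 0 <= f z) /\ K (supp f) /\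
    exists l : seq Z, [/\ uniq l, (forall z, f z != 0 -> z \in l) &
                        \sum_(z <- l) f z = 1].
Proof.
split.
- case=> f0 [Ks [l [/uniq_NoDup ul inl] s1]]; split => //; split => //.
  exists l; split => // z fz; apply/InP/inl; exact: fz.
- case=> f0 [Ks [l [ul inl s1]]]; split => //; split => //.
  exists [seq z <- l | f z != 0]; last by rewrite sum_filter_nz.
  split; first by apply/uniq_NoDup; rewrite filter_uniq.
  move=> z; rewrite InP mem_filter; split.
  + by move=> fz; rewrite /supp /= in fz; rewrite fz inl.
  + by case/andP.
Qed.

Lemma sum_ge_term (l : seq Z) (F : Z -> R) z : (forall w, 0 <= F w) ->
  z \in l -> F z <= \sum_(w <- l) F w.
Proof.
move=> F0; elim: l => // a l IH; rewrite inE big_cons => /orP [/eqP ->|/IH h].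
- by rewrite lerDl sumr_ge0.
- by rewrite (le_trans h) // lerDr.
Qed.

Lemma sum_nz (l : seq Z) (F : Z -> R) : \sum_(w <- l) F w != 0 ->
  exists z, z \in l /\ F z != 0.
Proof.
elim: l => [|a l IH]; first by rewrite big_nil eqxx.
rewrite big_cons; case: (boolP (F a != 0)) => [Fa _|]; first by exists a; rewrite inE eqxx.
rewrite negbK => /eqP ->; rewrite add0r => /IH [z [zl Fz]].
by exists z; rewrite inE zl orbT.
Qed.

Lemma sum_le_const (l : seq Z) (F : Z -> R) e : (forall w, w \in l -> F w <= e) ->
  \sum_(w <- l) F w <= (size l)%:R * e.
Proof.
elim: l => [|a l IH] H; first by rewrite big_nil mul0r.
rewrite big_cons /= -addn1 natrD mulrDl mul1r addrC lerD //.
  by apply: IH => w wl; apply: H; rewrite inE wl orbT.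
by apply: H; rewrite inE eqxx.
Qed.

Lemma sum_ind1 (l : seq Z) a (v : R) : uniq l -> a \in l ->
  \sum_(z <- l) (if `[< z = a >] then v else 0) = v.
Proof.
elim: l => // b l IH /= /andP [nb ul]; rewrite inE big_cons => /orP [/eqP eab|al].
- subst b; rewrite (_ : `[< a = a >] = true); last by apply/asboolP.
  rewrite big_seq big1 ?addr0 // => z zl.
  by rewrite asboolF // => eza; subst z; rewrite zl in nb.
- rewrite IH // asboolF ?add0r // => eba; subst b; by rewrite al in nb.
Qed.

Lemma finite_list (s : set Z) : finite_set s ->
  exists l : seq Z, uniq l /\ forall z, s z <-> z \in l.
Proof.
move/finite_seqP => [l ->]; exists (undup l); split; first exact: undup_uniq.
by move=> z; rewrite mem_undup.
Qed.

Lemma unif (P : R -> R -> Prop) (a b : R) : a <= b ->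
  (forall t e e', 0 < e' <= e -> P t e -> P t e') ->
  (forall t, a <= t <= b -> exists2 e, 0 < e & P t e) ->
  (forall t t' e, 0 < e -> P t e -> `|t' - t| <= e / 2 -> P t' (e / 2)) ->
  exists2 e, 0 < e & forall t, a <= t <= b -> P t e.
Proof.
move=> ab mono loc shift.
pose S := [set tau | a <= tau <= b /\ exists2 e, 0 < e & forall t, a <= t <= tau -> P t e].
have Sa : S a.
  have [e e0 Pe] : exists2 e, 0 < e & P a e by apply: loc; rewrite lexx ab.
  split; first by rewrite lexx ab.
  by exists e => // t /andP [h1 h2]; have -> : t = a by apply/eqP; rewrite eq_le h1 h2.
have hs : has_sup S by split; [exists a | exists b => x [/andP [_ ?] _]].
set T := sup S.
have aT : a <= T by apply: sup_upper_bound.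
have Tb : T <= b by apply: ge_sup; [exists a | move=> x [/andP [_ ?] _]].
have [eT eT0 PT] : exists2 e, 0 < e & P T e by apply: loc; rewrite aT Tb.
have eT20 : 0 < eT / 2 by rewrite divr_gt0.
have [tau1 [/andP [at1 t1b] [e1 e10 P1]] lt1] := sup_adherent eT20 hs.
rewrite -/T in lt1.
pose tau2 := Order.min b (T + eT / 2).
have P2 : forall t, a <= t <= tau2 -> P t (Order.min e1 (eT / 2)).
  move=> t /andP [at2 t2]; case: (lerP t tau1) => ht.
  - apply: (mono _ e1); first by rewrite lt_min e10 eT20 ge_min lexx.
    by apply: P1; rewrite at2 ht.
  - apply: (mono _ (eT / 2)); first by rewrite lt_min e10 eT20 ge_min lexx orbT.
    apply: (shift T t eT) => //.
    have := t2; rewrite /tau2 le_min => /andP [_ h2].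
    by rewrite ler_norml; apply/andP; split; lra.
have S2 : S tau2.
  split; last by exists (Order.min e1 (eT / 2)); rewrite ?lt_min ?e10 ?eT20.
  rewrite /tau2 le_min ge_min lexx ab /=; lra.
have t2T : tau2 <= T := sup_upper_bound hs S2.
exists (Order.min e1 (eT / 2)); first by rewrite lt_min e10 eT20.
move=> t /andP [hat tb]; apply: P2; rewrite hat /= /tau2 le_min tb /=.
by move: t2T; rewrite /tau2 ge_min => /orP [bT|]; lra.
Qed.

Variable d : Z -> Z -> \bar R.
Variables X Y : set Z.
Variable a0 : Z.
Variable r : R.
Hypothesis dsym : forall x y, d x y = d y x.
Hypothesis d0 : forall x, d x x = 0%E.
Hypothesis cover : forall z, X z \/ Y z.
Hypothesis a0X : X a0.
Hypothesis a0Y : Y a0.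
Definition XA z := X z /\ ~ Y z.
Definition YA z := Y z /\ ~ X z.
Hypothesis H1 : forall x y v, XA x -> YA y -> X v -> Y v ->
  (d x v <= d x y)%E /\ (d y v <= d x y)%E.
Hypothesis H2 : forall x y v, XA x -> YA y -> X v -> Y v -> (d v a0 <= d x y)%E.
Hypothesis r0 : 0 <= r.

Local Notation K := (VR d r setT).
Local Notation L := (VR d r X `|` VR d r Y).
Local Notation pt := (is_point K).

Lemma region z : [\/ XA z, YA z | X z /\ Y z].
Proof.
rewrite /XA /YA; case: (pselect (X z)); case: (pselect (Y z)) => hy hx.
- by apply: Or33.
- by apply: Or31.
- by apply: Or32.
- by case: (cover z).
Qed.

Lemma XA_YA z : XA z -> ~ YA z. Proof. by case=> ? ? []. Qed.
Lemma XA_a0 z : XA z -> z <> a0. Proof. by case=> _ h e; subst; apply: h. Qed.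
Lemma YA_a0 z : YA z -> z <> a0. Proof. by case=> _ h e; subst; apply: h. Qed.

Lemma VRB B s : VR d r B s <-> K s /\ s `<=` B.
Proof.
rewrite /VR /=; split.
- by case=> [fs [ne [sB dd]]].
- by case=> [[fs [ne [_ dd]]] sB].
Qed.

Lemma K_sub s t : K s -> t `<=` s -> t !=set0 -> K t.
Proof.
case=> [fs [ne [_ dd]]] ts tn; split; first exact: sub_finite_set fs.
by split => //; split => // x y /ts xs /ts ys; apply: dd.
Qed.

Definition hasXY (s : set Z) :=
  (exists x, s x /\ XA x) /\ (exists y, s y /\ YA y).

Lemma star s : K s -> hasXY s -> K (s `|` [set a0]).
Proof.
case=> [fs [ne [_ dd]]] [[x0 [sx0 Xx0]] [y0 [sy0 Yy0]]].
have dr : forall z, s z -> (d z a0 <= r%:E)%E.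
  move=> z sz; case: (region z) => [Xz|Yz|[Xz Yz]].
  - by have [h _] := H1 Xz Yy0 a0X a0Y; apply: (le_trans h); apply: dd.
  - by have [_ h] := H1 Xx0 Yz a0X a0Y; apply: (le_trans h); rewrite dsym; apply: dd.
  - by apply: (le_trans (H2 Xx0 Yy0 Xz Yz)); apply: dd.
split; first by rewrite finite_setU; split => //; apply: finite_set1.
split; first by case: ne => z sz; exists z; left.
split => // x y [sx|->] [sy|->].
- exact: dd.
- exact: dr.
- by rewrite dsym; apply: dr.
- by rewrite d0 lee_fin.
Qed.

Definition ext (s : set Z) := if pselect (hasXY s) then s `|` [set a0] else s.

Lemma ext_K s : K s -> K (ext s).
Proof. by rewrite /ext; case: pselect => // h Ks; apply: star. Qed.

Lemma sub_ext s : s `<=` ext s.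
Proof. move=> z sz; rewrite /ext; by case: (pselect (hasXY s)) => h //; left. Qed.

Definition slist (f : Z -> R) : seq Z :=
  match pselect (exists l : seq Z, uniq l /\ forall z, f z != 0 -> z \in l) with
  | left H => projT1 (cid H)
  | right _ => [::]
  end.

Lemma slistP f (l : seq Z) : uniq l -> (forall z, f z != 0 -> z \in l) ->
  uniq (slist f) /\ (forall z, f z != 0 -> z \in slist f).
Proof.
move=> ul cl; rewrite /slist; case: (pselect (exists l : seq Z, uniq l /\ forall z, f z != 0 -> z \in l)) => [H|NH]; first by case: (cid H).
by exfalso; apply: NH; exists l.
Qed.

Definition sm (P : Z -> Prop) f := \sum_(z <- slist f) (if `[< P z >] then f z else 0).

Lemma if_nz (P : Prop) (a : R) : (if `[< P >] then a else 0) != 0 -> a != 0.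
Proof. by case: (pselect P) => h; [rewrite asboolT | rewrite asboolF // eqxx]. Qed.

Lemma smE P f (l : seq Z) : uniq l -> (forall z, f z != 0 -> z \in l) ->
  sm P f = \sum_(z <- l) (if `[< P z >] then f z else 0).
Proof.
move=> ul cl; have [us cs] := slistP ul cl; apply: sum_cover => // z /if_nz;
  [apply: cs | apply: cl].
Qed.

Lemma pt_cover f : pt f -> [/\ forall z, 0 <= f z, K (supp f), uniq (slist f),
  (forall z, f z != 0 -> z \in slist f) & \sum_(z <- slist f) f z = 1].
Proof.
move/is_pointE => [f0 [Ks [l [ul cl s1]]]]; have [us cs] := slistP ul cl.
by split => //; rewrite -s1; apply: sum_cover.
Qed.

Lemma sm_ge0 P f : (forall z, 0 <= f z) -> 0 <= sm P f.
Proof. by move=> f0; apply: sumr_ge0 => z _; case: (pselect (P z)) => h; [rewrite asboolT | rewrite asboolF]. Qed.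

Lemma sm_term P f z : pt f -> P z -> f z <= sm P f.
Proof.
move=> /pt_cover [f0 _ us cs _] Pz; case: (eqVneq (f z) 0) => [->|fz].
  exact: sm_ge0.
have := @sum_ge_term (slist f) (fun w => if `[< P w >] then f w else 0) z.
rewrite asboolT //; apply; last exact: cs.
by move=> w; case: (pselect (P w)) => h; [rewrite asboolT | rewrite asboolF].
Qed.

Definition M (f : Z -> R) : R := sm XA f.
Definition N (f : Z -> R) : R := sm YA f.
Definition cc (f : Z -> R) : R := Order.min (M f) (N f).

Definition rho (f : Z -> R) (z : Z) : R :=
  f z - (if `[< XA z >] then f z * (cc f / M f) else 0)
      - (if `[< YA z >] then f z * (cc f / N f) else 0)
      + (if `[< z = a0 >] then 2 * cc f else 0).

Lemma frac01 (c m : R) : 0 <= c -> c <= m -> 0 <= c / m <= 1.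
Proof.
move=> c0 cm; case: (eqVneq m 0) => [->|m0]; first by rewrite invr0 mulr0 lexx ler01.
have mp : 0 < m by rewrite lt_def m0 (le_trans c0 cm).
by rewrite divr_ge0 ?(le_trans c0 cm) //= ler_pdivrMr // mul1r.
Qed.

Lemma cc_props f : pt f -> [/\ 0 <= cc f, cc f <= M f, cc f <= N f,
  0 <= cc f / M f <= 1 & 0 <= cc f / N f <= 1].
Proof.
move=> /pt_cover [f0 _ _ _ _].
have M0 := sm_ge0 XA f0; have N0 := sm_ge0 YA f0.
have c0 : 0 <= cc f by rewrite /cc le_min M0 N0.
have cM : cc f <= M f by rewrite /cc ge_min lexx.
have cN : cc f <= N f by rewrite /cc ge_min lexx orbT.
by split => //; apply: frac01.
Qed.

Lemma mul_frac (c m : R) : 0 <= c -> c <= m -> m * (c / m) = c.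
Proof.
move=> c0 cm; case: (eqVneq m 0) => [m0|m0].
  by move: cm; rewrite m0 mul0r => cm; apply/eqP; rewrite eq_le c0 cm.
by rewrite mulrC divfK.
Qed.

Lemma abT (P : Prop) : P -> `[< P >] = true.
Proof. by move=> h; apply/asboolP. Qed.

Lemma rhoXA f z : XA z -> rho f z = f z - f z * (cc f / M f).
Proof.
move=> h; rewrite /rho (abT h) (asboolF (XA_YA h)) (asboolF (XA_a0 h)).
by rewrite subr0 addr0.
Qed.

Lemma rhoYA f z : YA z -> rho f z = f z - f z * (cc f / N f).
Proof.
move=> h; have nh : ~ XA z by move=> /XA_YA; apply.
rewrite /rho (abT h) (asboolF nh) (asboolF (YA_a0 h)).
by rewrite subr0 addr0.
Qed.

Lemma rhoA f z : X z -> Y z -> rho f z = f z + (if `[< z = a0 >] then 2 * cc f else 0).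
Proof.
move=> hx hy; have n1 : ~ XA z by case.
have n2 : ~ YA z by case.
by rewrite /rho (asboolF n1) (asboolF n2) !subr0.
Qed.

Lemma rho_ge0 f z : pt f -> 0 <= rho f z.
Proof.
move=> pf; have [f0 _ _ _ _] := pt_cover pf; have [c0 _ _ /andP [q0 q1] /andP [p0 p1]] := cc_props pf.
case: (region z) => [h|h|[hx hy]].
- by rewrite rhoXA // -{1}(mulr1 (f z)) -mulrBr mulr_ge0 // subr_ge0.
- by rewrite rhoYA // -{1}(mulr1 (f z)) -mulrBr mulr_ge0 // subr_ge0.
- rewrite rhoA //; case: (pselect (z = a0)) => h; [rewrite (abT h) | rewrite (asboolF h)].
  + by rewrite addr_ge0 // mulr_ge0.
  + by rewrite addr0.
Qed.

Lemma rho_eq f : cc f = 0 -> rho f = f.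
Proof.
move=> c0; apply: funext => z; rewrite /rho c0 !mul0r !mulr0 !if_same.
by rewrite !subr0 addr0.
Qed.

Lemma rho_cover f z : rho f z != 0 -> f z != 0 \/ z = a0.
Proof.
case: (eqVneq (f z) 0) => [fz|]; last by left.
case: (pselect (z = a0)) => [|h]; first by right.
by rewrite /rho fz !mul0r !if_same (asboolF h) !subr0 addr0 eqxx.
Qed.

Definition lst (f : Z -> R) := if a0 \in slist f then slist f else a0 :: slist f.

Lemma lstP f : pt f -> [/\ uniq (lst f), a0 \in lst f,
  (forall z, f z != 0 -> z \in lst f) & (forall z, rho f z != 0 -> z \in lst f)].
Proof.
move=> /pt_cover [_ _ us cs _].
have cl : forall z, f z != 0 -> z \in lst f.
  by move=> z /cs; rewrite /lst; case: ifP => // _ h; rewrite inE h orbT.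
have al : a0 \in lst f by rewrite /lst; case: ifP => // _; rewrite inE eqxx.
split => //.
- by rewrite /lst; case: ifP => //= ->; rewrite us.
- by move=> z /rho_cover [/cl //|->].
Qed.

Lemma sum_ind_mul P (l : seq Z) (f : Z -> R) (q : R) :
  \sum_(z <- l) (if `[< P z >] then f z * q else 0) =
  (\sum_(z <- l) (if `[< P z >] then f z else 0)) * q.
Proof. by rewrite mulr_suml; apply: eq_bigr => z _; case: asboolP => _; rewrite ?mul0r. Qed.

Lemma sum_pt (f : Z -> R) (l : seq Z) : pt f -> uniq l -> (forall z, f z != 0 -> z \in l) ->
  \sum_(z <- l) f z = 1.
Proof. by move=> /pt_cover [_ _ us cs <-] ul cl; apply: sum_cover. Qed.

Lemma rho_sum f : pt f -> \sum_(z <- lst f) rho f z = 1.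
Proof.
move=> pf; have [ul al cl _] := lstP pf.
have [c0 cM cN _ _] := cc_props pf.
rewrite /rho big_split /= !sumrB sum_ind1 // !sum_ind_mul -!smE //.
rewrite (sum_pt pf) // -/(M f) -/(N f) !mul_frac //.
lra.
Qed.

Lemma ccM0 (f : Z -> R) : pt f -> cc f != 0 -> M f != 0 /\ N f != 0.
Proof.
move=> pf; have [f0 _ _ _ _] := pt_cover pf.
have M0 := sm_ge0 XA f0; have N0 := sm_ge0 YA f0.
rewrite /cc => cz; split; apply: contraNneq cz => e.
- by rewrite -/(M f) e min_l.
- by rewrite -/(N f) e min_r.
Qed.

Lemma sm_nz P (f : Z -> R) : sm P f != 0 -> exists z, P z /\ f z != 0.
Proof.
move=> /sum_nz [z [_ h]]; exists z; case: (pselect (P z)) => Pz.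
- by move: h; rewrite (abT Pz).
- by move: h; rewrite (asboolF Pz) eqxx.
Qed.

Lemma hasXY_of (f : Z -> R) s : pt f -> cc f != 0 -> supp f `<=` s -> hasXY s.
Proof.
move=> pf /(ccM0 pf) [/sm_nz [x [hx fx]] /sm_nz [y [hy fy]]] fs.
by split; [exists x | exists y]; split => //; apply: fs.
Qed.

Lemma ext_XY s : hasXY s -> ext s = s `|` [set a0].
Proof. by move=> h; rewrite /ext; case: (pselect (hasXY s)). Qed.

Lemma supp_rho_ext (f : Z -> R) s : pt f -> supp f `<=` s -> supp (rho f) `<=` ext s.
Proof.
move=> pf fs z; rewrite /supp /= => hz.
case: (eqVneq (cc f) 0) => [c0|c0].
  by apply: sub_ext; apply: fs; move: hz; rewrite rho_eq.
rewrite ext_XY; last exact: (hasXY_of pf c0 fs).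
by case: (rho_cover hz) => [h|->]; [left; apply: fs | right].
Qed.

Lemma sum1_nz (f : Z -> R) (l : seq Z) : \sum_(z <- l) f z = 1 -> exists z, f z != 0.
Proof. by move=> h; have [|z [_ hz]] := @sum_nz l f; [rewrite h oner_neq0 | exists z]. Qed.

Lemma rho_K (f : Z -> R) : pt f -> K (supp (rho f)).
Proof.
move=> pf; have [_ Ks _ _ _] := pt_cover pf.
apply: (K_sub (ext_K Ks)); first exact: supp_rho_ext.
by have [z hz] := sum1_nz (rho_sum pf); exists z.
Qed.

Lemma rho_sideY (f : Z -> R) z : pt f -> N f <= M f -> YA z -> rho f z = 0.
Proof.
move=> pf NM hz; rewrite rhoYA // /cc min_r //.
case: (eqVneq (N f) 0) => [N0|N0]; last by rewrite divff // mulr1 subrr.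
have [f0 _ _ _ _] := pt_cover pf.
have : f z <= N f by apply: sm_term.
rewrite N0 => fz; have -> : f z = 0 by apply/eqP; rewrite eq_le fz f0.
by rewrite mul0r subrr.
Qed.

Lemma rho_sideX (f : Z -> R) z : pt f -> M f <= N f -> XA z -> rho f z = 0.
Proof.
move=> pf NM hz; rewrite rhoXA // /cc min_l //.
case: (eqVneq (M f) 0) => [N0|N0]; last by rewrite divff // mulr1 subrr.
have [f0 _ _ _ _] := pt_cover pf.
have : f z <= M f by apply: sm_term.
rewrite N0 => fz; have -> : f z = 0 by apply/eqP; rewrite eq_le fz f0.
by rewrite mul0r subrr.
Qed.

Lemma ptK_L (f : Z -> R) : pt f -> supp f `<=` X \/ supp f `<=` Y -> is_point L f.
Proof.
move=> /is_pointE [f0 [Ks [l hl]]] h; apply/is_pointE; split => //; split; last by exists l.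
by case: h => h; [left | right]; apply/VRB.
Qed.

Lemma ptL_K (f : Z -> R) : is_point L f -> pt f.
Proof.
move=> /is_pointE [f0 [Ls [l hl]]]; apply/is_pointE; split => //; split; last by exists l.
by case: Ls => /VRB [].
Qed.

Lemma rho_ptL (f : Z -> R) : pt f -> is_point L (rho f).
Proof.
move=> pf; have pr : pt (rho f).
  apply/is_pointE; split; first by move=> z; apply: rho_ge0.
  split; first exact: rho_K.
  by have [ul _ _ cl] := lstP pf; exists (lst f); split => //; apply: rho_sum.
apply: ptK_L => //.
case/orP: (le_total (N f) (M f)) => h; [left | right] => z; rewrite /supp /= => hz.
- case: (region z) => [hx|hy|[hx hy]]; first by case: hx.
  + by move: hz; rewrite (rho_sideY pf h hy) eqxx.
  + exact: hx.
- case: (region z) => [hx|hy|[hx hy]]; last exact: hy.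
  + by move: hz; rewrite (rho_sideX pf h hx) eqxx.
  + by case: hy.
Qed.

Lemma rho_fix (f : Z -> R) : is_point L f -> rho f = f.
Proof.
move=> pL; have pf := ptL_K pL.
have [f0 [Ls _]] := proj1 (is_pointE L f) pL.
have [M0 N0] : 0 <= M f /\ 0 <= N f by split; apply: sm_ge0.
apply: rho_eq; rewrite /cc.
case: Ls => /VRB [_ sX].
- have -> : N f = 0.
    rewrite /N /sm big1 // => z _; case: (pselect (YA z)) => [hy|h].
    + rewrite (abT hy); case: hy => _ nx.
      by case: (eqVneq (f z) 0) => // hz; exfalso; apply: nx; apply: sX.
    + by rewrite (asboolF h).
  by rewrite min_r.
- have -> : M f = 0.
    rewrite /M /sm big1 // => z _; case: (pselect (XA z)) => [hx|h].
    + rewrite (abT hx); case: hx => _ ny.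
      by case: (eqVneq (f z) 0) => // hz; exfalso; apply: ny; apply: sX.
    + by rewrite (asboolF h).
  by rewrite min_l.
Qed.

Lemma nb (t : R) : t <= `|t| /\ - t <= `|t|.
Proof. by split; [apply: ler_norm | rewrite -normrN; apply: ler_norm]. Qed.

Lemma Glip (q q' M N M' N' : R) : 0 <= q <= 1 -> 0 <= q' <= 1 ->
  0 <= M -> 0 <= N -> 0 <= M' -> 0 <= N' ->
  `|q * (M - Order.min M N) - q' * (M' - Order.min M' N')| <=
    2 * `|q * M - q' * M'| + `|M - M'| + `|N - N'|.
Proof.
move=> /andP [q0 q1] /andP [q0' q1'] M0 N0 M0' N0'.
have [a1 a2] := nb (q * M - q' * M').
have [b1 b2] := nb (M - M').
have [c1 c2] := nb (N - N').
case: (leP M N) => h; case: (leP M' N') => h'.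
- rewrite !subrr !mulr0 subrr normr0. lra.
- rewrite subrr mulr0 sub0r normrN ger0_norm; last by rewrite mulr_ge0 // subr_ge0 ltW.
  have : q' * (M' - N') <= M' - N' by rewrite ler_piMl // subr_ge0 ltW.
  lra.
- rewrite subrr mulr0 subr0 ger0_norm; last by rewrite mulr_ge0 // subr_ge0 ltW.
  have : q * (M - N) <= M - N by rewrite ler_piMl // subr_ge0 ltW.
  lra.
- rewrite ler_norml; apply/andP; split; case: (lerP q q') => hq; nra.
Qed.

Lemma G_form (u m n : R) : 0 <= u -> u <= m ->
  [/\ u - u * (Order.min m n / m) = (u / m) * (m - Order.min m n),
      u = (u / m) * m & 0 <= u / m <= 1].
Proof.
move=> u0 um; case: (eqVneq m 0) => [m0|m0].
  have u00 : u = 0 by apply/eqP; rewrite eq_le u0 -m0 um.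
  by rewrite u00 m0 !mul0r subrr lexx ler01.
split; [by rewrite mulrBr divfK //; congr (_ - _); rewrite !mulrA mulrAC
       | by rewrite divfK | exact: frac01].
Qed.

Lemma min_lip (a b a' b' : R) :
  `|Order.min a b - Order.min a' b'| <= `|a - a'| + `|b - b'|.
Proof.
have [a1 a2] := nb (a - a'); have [b1 b2] := nb (b - b').
rewrite ler_norml; case: (leP a b) => h; case: (leP a' b') => h'; apply/andP; split; lra.
Qed.

Lemma rho_lip0 (f g : Z -> R) z : pt f -> pt g ->
  `|rho g z - rho f z| <= 2 * `|g z - f z| + 2 * (`|M g - M f| + `|N g - N f|).
Proof.
move=> pf pg; have [f0 _ _ _ _] := pt_cover pf; have [g0 _ _ _ _] := pt_cover pg.
have [Mf0 Nf0] : 0 <= M f /\ 0 <= N f by split; apply: sm_ge0.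
have [Mg0 Ng0] : 0 <= M g /\ 0 <= N g by split; apply: sm_ge0.
have [u1 u2] := nb (g z - f z).
have [m1 m2] := nb (M g - M f); have [n1 n2] := nb (N g - N f).
case: (region z) => [h|h|[hx hy]].
- rewrite !rhoXA // /cc.
  have [e1 e2 q1] := G_form (N g) (g0 z) (sm_term pg h).
  have [e1' e2' q1'] := G_form (N f) (f0 z) (sm_term pf h).
  rewrite e1 e1'; apply: (le_trans (Glip _ _ _ _ _ _)) => //.
  rewrite -e2 -e2'; lra.
- rewrite !rhoYA // /cc (minC (M g)) (minC (M f)).
  have [e1 e2 q1] := G_form (M g) (g0 z) (sm_term pg h).
  have [e1' e2' q1'] := G_form (M f) (f0 z) (sm_term pf h).
  rewrite e1 e1'; apply: (le_trans (Glip _ _ _ _ _ _)) => //.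
  rewrite -e2 -e2'; lra.
- rewrite !rhoA //; case: (pselect (z = a0)) => e; last first.
    by rewrite (asboolF e) !addr0; lra.
  rewrite (abT e) /cc.
  have := min_lip (M g) (N g) (M f) (N f).
  set c1 := Order.min (M g) (N g); set c2 := Order.min (M f) (N f) => hc.
  have [k1 k2] := nb (c1 - c2).
  rewrite ler_norml; apply/andP; split; lra.
Qed.

Definition dist (ls : seq Z) (f g : Z -> R) := \sum_(z <- ls) `|g z - f z|.

Lemma dist_ge0 ls f g : 0 <= dist ls f g.
Proof. by apply: sumr_ge0. Qed.

Lemma dist_term ls (f g : Z -> R) z : (forall z, f z != 0 -> z \in ls) ->
  (forall z, g z != 0 -> z \in ls) -> `|g z - f z| <= dist ls f g.
Proof.
move=> cf cg; case: (boolP (z \in ls)) => zl.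
  by apply: (@sum_ge_term ls (fun w => `|g w - f w|)) => // w.
have -> : f z = 0 by apply/eqP; apply: contraNT zl => /cf.
have -> : g z = 0 by apply/eqP; apply: contraNT zl => /cg.
by rewrite subrr normr0 dist_ge0.
Qed.

Lemma sm_lip P ls (f g : Z -> R) : uniq ls -> (forall z, f z != 0 -> z \in ls) ->
  (forall z, g z != 0 -> z \in ls) -> `|sm P g - sm P f| <= dist ls f g.
Proof.
move=> ul cf cg; rewrite (smE P ul cf) (smE P ul cg) -sumrB.
apply: (le_trans (ler_norm_sum _ _ _)); apply: ler_sum => z _.
by case: asboolP => _; rewrite ?subrr ?normr0.
Qed.

Lemma rho_lip ls (f g : Z -> R) z : pt f -> pt g -> uniq ls ->
  (forall z, f z != 0 -> z \in ls) -> (forall z, g z != 0 -> z \in ls) ->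
  `|rho g z - rho f z| <= 6 * dist ls f g.
Proof.
move=> pf pg ul cf cg; apply: (le_trans (rho_lip0 z pf pg)).
have := dist_term z cf cg; have := sm_lip XA ul cf cg; have := sm_lip YA ul cf cg.
rewrite -/(M f) -/(M g) -/(N f) -/(N g); lra.
Qed.

Lemma dist_small (ls : seq Z) (s : set Z) (f g : Z -> R) e :
  (forall z, z \in ls -> s z) -> (forall z, s z -> `|g z - f z| < e) ->
  dist ls f g <= (size ls)%:R * e.
Proof. by move=> hs he; apply: sum_le_const => z /hs /he /ltW. Qed.

Lemma eta_ok (m c : R) (n : nat) : 0 < m -> 0 < c ->
  exists2 eta, 0 < eta & c * (n%:R * eta) < m.
Proof.
move=> m0 c0; have k0 : 0 < c * (n%:R + 1) by rewrite mulr_gt0 // ltr_wpDl.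
exists (m / (c * (n%:R + 1))); first by rewrite divr_gt0.
have e : c * (n%:R + 1) * (m / (c * (n%:R + 1))) = m by rewrite mulrC divfK // gt_eqF.
have p : 0 < m / (c * (n%:R + 1)) by rewrite divr_gt0.
move: e p; set q := m / _ => e p.
have n0 : 0 <= (n%:R : R) by [].
nra.
Qed.

Lemma listK s : K s -> exists ls : seq Z, uniq ls /\ forall z, s z <-> z \in ls.
Proof. by case=> fs _; apply: finite_list. Qed.

Lemma cover_of (f : Z -> R) s (ls : seq Z) : (forall z, s z <-> z \in ls) ->
  supp f `<=` s -> forall z, f z != 0 -> z \in ls.
Proof. by move=> hl fs z fz; apply/hl/fs. Qed.

Lemma noXY_side s : ~ hasXY s -> s `<=` X \/ s `<=` Y.
Proof.
move=> h; case: (pselect (exists x, s x /\ XA x)) => hx.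
- left => z sz; case: (region z) => [[]|hy|[]] //.
  by exfalso; apply: h; split => //; exists z.
- right => z sz; case: (region z) => [hx'|[]|[]] //.
  by exfalso; apply: hx; exists z.
Qed.

Lemma side_sub (f : Z -> R) s : pt f -> supp f `<=` s -> N f <= M f ->
  supp (rho f) `<=` (s `&` X) `|` [set a0].
Proof.
move=> pf fs h z hz.
case: (eqVneq z a0) => [->|za]; first by right.
have hs : ext s z by apply: (supp_rho_ext pf fs).
have sz : s z.
  move: hs; rewrite /ext; case: (pselect (hasXY s)) => hxy //.
  by case => // e; rewrite e eqxx in za.
left; split => //; case: (region z) => [[]|hy|[]] //.
by move: hz; rewrite /supp /= (rho_sideY pf h hy) eqxx.
Qed.

Lemma side_subY (f : Z -> R) s : pt f -> supp f `<=` s -> M f <= N f ->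
  supp (rho f) `<=` (s `&` Y) `|` [set a0].
Proof.
move=> pf fs h z hz.
case: (eqVneq z a0) => [->|za]; first by right.
have hs : ext s z by apply: (supp_rho_ext pf fs).
have sz : s z.
  move: hs; rewrite /ext; case: (pselect (hasXY s)) => hxy //.
  by case => // e; rewrite e eqxx in za.
left; split => //; case: (region z) => [hx|[]|[]] //.
by move: hz; rewrite /supp /= (rho_sideX pf h hx) eqxx.
Qed.

Lemma side_L s B : K s -> hasXY s -> B a0 -> (B = X \/ B = Y) ->
  L ((s `&` B) `|` [set a0]).
Proof.
move=> Ks hs Ba hB.
have Ks1 : K ((s `&` B) `|` [set a0]).
  apply: (K_sub (ext_K Ks)); last by exists a0; right.
  by rewrite ext_XY // => z [[sz _]|->]; [left|right].
have sB : (s `&` B) `|` [set a0] `<=` B by move=> z [[_ ?]|->].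
by case: hB => e; subst B; [left|right]; apply/VRB.
Qed.

Lemma rho_open U : openK L U -> openK K (fun f => pt f /\ U (rho f)).
Proof.
move=> [UL Uo]; split; first by move=> f [].
move=> s Ks f [pf Uf] fs.
have [ls [uls hls]] := listK Ks.
have cf := cover_of hls fs.
case: (pselect (hasXY s)) => hs; last first.
  have Ls : L s by case: (noXY_side hs) => h; [left|right]; apply/VRB.
  have rid : forall g, pt g -> supp g `<=` s -> rho g = g.
    move=> g pg gs; apply: rho_eq; apply/eqP; apply: contra_notT hs => c0.
    exact: hasXY_of pg c0 gs.
  have rfs : supp (rho f) `<=` s by rewrite (rid f pf fs).
  have [e e0 He] := Uo s Ls (rho f) Uf rfs.
  exists e => // g pg gs close; split => //; rewrite (rid g pg gs).
  apply: He => //; last by rewrite (rid f pf fs).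
  by apply: ptK_L => //; case: (noXY_side hs) => h; [left|right]; apply: subset_trans h.
set s1 := (s `&` X) `|` [set a0]; set s2 := (s `&` Y) `|` [set a0].
have L1 : L s1 by apply: side_L => //; left.
have L2 : L s2 by apply: side_L => //; right.
have [e1 e10 He1] : exists2 e, 0 < e & (N f <= M f -> forall w, is_point L w ->
    supp w `<=` s1 -> (forall z, s1 z -> `|w z - rho f z| < e) -> U w).
  case: (lerP (N f) (M f)) => h; last by exists 1.
  have [e e0 He] := Uo s1 L1 (rho f) Uf (side_sub pf fs h).
  by exists e.
have [e2 e20 He2] : exists2 e, 0 < e & (M f <= N f -> forall w, is_point L w ->
    supp w `<=` s2 -> (forall z, s2 z -> `|w z - rho f z| < e) -> U w).
  case: (lerP (M f) (N f)) => h; last by exists 1.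
  have [e e0 He] := Uo s2 L2 (rho f) Uf (side_subY pf fs h).
  by exists e.
have [gp gp0 hgp] : exists2 gp : R, 0 < gp & (M f != N f -> gp <= `|M f - N f|).
  case: (eqVneq (M f) (N f)) => h; first by exists 1.
  by exists `|M f - N f|; rewrite ?normr_gt0 ?subr_eq0.
set m := Order.min (Order.min e1 e2) gp.
have m0 : 0 < m by rewrite !lt_min e10 e20 gp0.
have [me1 me2 mgp] : [/\ m <= e1, m <= e2 & m <= gp].
  by rewrite /m !ge_min !lexx !orbT.
have [eta eta0 Heta] := eta_ok (size ls) m0 (ltr0Sn R 5).
exists eta => // g pg gs close.
have cg := cover_of hls gs.
have hD : dist ls f g <= (size ls)%:R * eta.
  by apply: (dist_small (s := s)) => // z /hls.
have hM := sm_lip XA uls cf cg; have hN := sm_lip YA uls cf cg.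
rewrite -/(M f) -/(M g) in hM; rewrite -/(N f) -/(N g) in hN.
have [mm1 mm2] := nb (M g - M f); have [nn1 nn2] := nb (N g - N f).
have hrho : forall z, `|rho g z - rho f z| < m.
  move=> z; apply: (le_lt_trans (rho_lip z pf pg uls cf cg)); lra.
split => //.
case/orP: (le_total (N g) (M g)) => h.
- case: (lerP (N f) (M f)) => hf.
    apply: He1 => //; first exact: rho_ptL.
    - exact: side_sub pg gs h.
    - by move=> z _; apply: (lt_le_trans (hrho z)).
  have := hgp (negbT (lt_eqF hf)); rewrite ltr0_norm ?subr_lt0 //; lra.
- case: (lerP (M f) (N f)) => hf.
    apply: He2 => //; first exact: rho_ptL.
    - exact: side_subY pg gs h.
    - by move=> z _; apply: (lt_le_trans (hrho z)).
  have := hgp (negbT (gt_eqF hf)); rewrite gtr0_norm ?subr_gt0 //; lra.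
Qed.

Definition phi (t : R) (f : Z -> R) (z : Z) : R := (1 - t) * f z + t * rho f z.

Lemma phi_nz t (f : Z -> R) z : phi t f z != 0 -> f z != 0 \/ rho f z != 0.
Proof.
rewrite /phi; case: (eqVneq (f z) 0) => [->|]; last by left.
case: (eqVneq (rho f z) 0) => [->|]; last by right.
by rewrite !mulr0 addr0 eqxx.
Qed.

Lemma supp_phi_ext t (f : Z -> R) s : pt f -> supp f `<=` s -> supp (phi t f) `<=` ext s.
Proof.
move=> pf fs z; rewrite /supp /= => /phi_nz [h|h].
- by apply: sub_ext; apply: fs.
- by apply: (supp_rho_ext pf fs).
Qed.

Lemma phi_pt t (f : Z -> R) : pt f -> 0 <= t <= 1 -> pt (phi t f).
Proof.
move=> pf /andP [t0 t1]; have [f0 Ks _ _ _] := pt_cover pf.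
have [ul al cl cr] := lstP pf.
have s1 : \sum_(z <- lst f) phi t f z = 1.
  rewrite /phi big_split /= -!mulr_sumr rho_sum // (sum_pt pf ul cl).
  by rewrite !mulr1 subrK.
apply/is_pointE; split.
  by move=> z; rewrite /phi addr_ge0 // mulr_ge0 ?subr_ge0 // rho_ge0.
split.
  apply: (K_sub (ext_K Ks)); first exact: supp_phi_ext.
  by have [z hz] := sum1_nz s1; exists z.
exists (lst f); split => // z /phi_nz [/cl|/cr] //.
Qed.

Lemma coord_le1 (f : Z -> R) z : pt f -> f z <= 1.
Proof.
move=> pf; have [f0 _ us cs s1] := pt_cover pf.
case: (eqVneq (f z) 0) => [->|fz]; first exact: ler01.
by rewrite -s1; apply: sum_ge_term => //; apply: cs.
Qed.

Lemma rho_pt (f : Z -> R) : pt f -> pt (rho f).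
Proof. by move=> pf; apply: ptL_K; apply: rho_ptL. Qed.

Lemma phi_t (f : Z -> R) t t' z : pt f -> `|phi t' f z - phi t f z| <= `|t' - t|.
Proof.
move=> pf; have e : phi t' f z - phi t f z = (t' - t) * (rho f z - f z).
  by rewrite /phi; ring.
have [f0 _ _ _ _] := pt_cover pf.
have h1 := coord_le1 z pf; have h2 := coord_le1 z (rho_pt pf).
have h3 := rho_ge0 z pf.
rewrite e normrM ler_piMr // ler_norml; apply/andP; split; have := f0 z; lra.
Qed.

Lemma phi_lip ls (f g : Z -> R) t z : pt f -> pt g -> uniq ls ->
  (forall z, f z != 0 -> z \in ls) -> (forall z, g z != 0 -> z \in ls) ->
  0 <= t <= 1 -> `|phi t g z - phi t f z| <= 7 * dist ls f g.
Proof.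
move=> pf pg ul cf cg /andP [t0 t1].
have e : phi t g z - phi t f z = (1 - t) * (g z - f z) + t * (rho g z - rho f z).
  by rewrite /phi; ring.
have h1 := dist_term z cf cg; have h2 := rho_lip z pf pg ul cf cg.
rewrite e; apply: (le_trans (ler_normD _ _)); rewrite !normrM.
rewrite (ger0_norm t0) ger0_norm ?subr_ge0 //.
have : (1 - t) * `|g z - f z| <= `|g z - f z| by rewrite ler_piMl // lerBlDr lerDl.
have : t * `|rho g z - rho f z| <= `|rho g z - rho f z| by rewrite ler_piMl.
lra.
Qed.

Lemma phi_open U t0 (f0 : Z -> R) : openK K U -> 0 <= t0 <= 1 -> pt f0 ->
  U (phi t0 f0) -> exists2 del, 0 < del & exists V, [/\ openK K V, V f0 &
    forall f t, V f -> 0 <= t <= 1 -> `|t - t0| < del -> U (phi t f)].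
Proof.
move=> [UK Uo] t01 pf0 Uf0.
have [_ Ks0 _ _ _] := pt_cover pf0.
have [e0 e00 He0] := Uo _ (ext_K Ks0) _ Uf0 (supp_phi_ext (t:=t0) pf0 (@subset_refl _ _)).
set del := e0 / 2.
have del0 : 0 < del by rewrite divr_gt0.
exists del => //.
exists (fun f => pt f /\ forall t, 0 <= t <= 1 -> `|t - t0| <= del -> U (phi t f)).
split.
- split; first by move=> f [].
  move=> s Ks f [pf Vf] fs.
  have [ls [uls hls]] := listK Ks.
  have cf := cover_of hls fs.
  pose P t e := forall w, pt w -> supp w `<=` ext s ->
    (forall z, ext s z -> `|w z - phi t f z| < e) -> U w.
  have [eps eps0 Heps] : exists2 e, 0 < e & forall t, Order.max 0 (t0 - del) <= t <= Order.min 1 (t0 + del) -> P t e.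
    apply: unif.
    - rewrite ge_max !le_min; case/andP: t01 => h1 h2.
      by apply/andP; split; apply/andP; split; lra.
    - move=> t e e' /andP [e'0 e'e] Pe w pw ws wc; apply: Pe => // z sz.
      by apply: (lt_le_trans (wc z sz)).
    - move=> t; rewrite ge_max !le_min => /andP [/andP [h0 h1] /andP [h2 h3]].
      have t01' : 0 <= t <= 1 by rewrite h0 h2.
      have Ut : U (phi t f).
        by apply: Vf => //; rewrite ler_norml; apply/andP; split; lra.
      have [e e1 He] := Uo _ (ext_K Ks) _ Ut (supp_phi_ext (t:=t) pf fs).
      by exists e.
    - move=> t tt e ee Pe htt w pw ws wc; apply: Pe => // z sz.
      have := wc z sz; have := phi_t t tt z pf.
      have [a1 a2] := nb (w z - phi tt f z).
      have [b1 b2] := nb (phi tt f z - phi t f z).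
      have [c1 c2] := nb (w z - phi t f z).
      move=> hh1 hh2; rewrite ltr_norml; apply/andP; split; lra.
  have [eta eta0 Heta] := eta_ok (size ls) eps0 (ltr0Sn R 6).
  exists eta => // g pg gs close; split => // t t01' htt.
  have cg := cover_of hls gs.
  have hD : dist ls f g <= (size ls)%:R * eta.
    by apply: (dist_small (s := s)) => // z /hls.
  have Pt : P t eps.
    apply: Heps; rewrite ge_max !le_min; move: htt; rewrite ler_norml.
    case/andP: t01' => ? ?; case/andP: t01 => ? ?; move=> /andP [? ?].
    by apply/andP; split; apply/andP; split; lra.
  apply: Pt; first exact: phi_pt.
    exact: supp_phi_ext.
  move=> z _; apply: (le_lt_trans (phi_lip z pf pg uls cf cg t01')); lra.
- split => // t t1 htt; apply: He0; first exact: phi_pt.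
    exact: supp_phi_ext.
  move=> z _; apply: (le_lt_trans (phi_t t0 t z pf0)).
  rewrite /del in htt; lra.
- by move=> f t [_ Vf] t1 htt; apply: Vf => //; apply: ltW.
Qed.

Lemma phi0 (f : Z -> R) : phi 0 f = f.
Proof. by apply: funext => z; rewrite /phi subr0 mul1r mul0r addr0. Qed.

Lemma phi1 (f : Z -> R) : phi 1 f = rho f.
Proof. by apply: funext => z; rewrite /phi subrr mul0r add0r mul1r. Qed.

Lemma phi_fix (f : Z -> R) t : rho f = f -> phi t f = f.
Proof. by move=> e; apply: funext => z; rewrite /phi e -mulrDl subrK mul1r. Qed.

Lemma cube_some n (q : option 'I_n -> R) : cube q -> cube (fun i => q (Some i)).
Proof. by move=> cq i; apply: cq. Qed.

Lemma main_sec : @weak_equiv_incl R Z L K.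
Proof.
move=> n x hx.
have xL : forall p : 'I_n -> R, bdry p -> is_point L x.
  move=> p [i _]; case: hx => // n0; subst n; by case: i.
split.
- move=> g [[gpt gc] gb].
  exists (fun p => rho (g p)).
    split.
      split; first by move=> p cp; apply: rho_ptL; apply: gpt.
      move=> U oU p cp Up.
      have [e e0 He] := gc _ (rho_open oU) p cp (conj (gpt p cp) Up).
      by exists e => // q cq hq; have [_ ?] := He q cq hq.
    by move=> p cp bp; rewrite (gb p cp bp); apply: rho_fix; exact: xL p bp.
  exists (fun q => phi (q None) (g (fun i => q (Some i)))); split.
  + split.
      move=> q cq; apply: phi_pt; first by apply: gpt; apply: cube_some.
      exact: cq.
    move=> U oU q cq Uq.
    have [del del0 [V [oV Vf HV]]] := phi_open oU (cq None) (gpt _ (cube_some cq)) Uq.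
    have [e e0 He] := gc V oV _ (cube_some cq) Vf.
    exists (Order.min del e); first by rewrite lt_min del0 e0.
    move=> q' cq' close; apply: HV.
    * apply: He; first exact: cube_some.
      by move=> i; apply: (lt_le_trans (close (Some i))); rewrite ge_min lexx orbT.
    * exact: cq'.
    * by apply: (lt_le_trans (close None)); rewrite ge_min lexx.
  + by move=> p cp; rewrite phi0.
  + by move=> p cp; rewrite phi1.
  + move=> p t cp bp t01 /=; rewrite (gb p cp bp); apply: phi_fix.
    by apply: rho_fix; apply: xL bp.
- move=> g0 g1 [[g0pt g0c] g0b] [[g1pt g1c] g1b] [H [[Hpt Hc] HH0 HH1 Hb]].
  exists (fun q => rho (H q)); split.
  + split; first by move=> q cq; apply: rho_ptL; apply: Hpt.
    move=> U oU q cq Uq.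
    have [e e0 He] := Hc _ (rho_open oU) q cq (conj (Hpt q cq) Uq).
    by exists e => // q' cq' hq; have [_ ?] := He q' cq' hq.
  + by move=> p cp; rewrite HH0 // rho_fix //; apply: g0pt.
  + by move=> p cp; rewrite HH1 // rho_fix //; apply: g1pt.
  + by move=> p t cp bp t01; rewrite Hb // rho_fix //; apply: xL bp.
Qed.
End Gen.

Unset Implicit Arguments.
Set Strict Implicit.

Theorem proposition10p7 (R : realType) (Z : Type) (d : Z -> Z -> \bar R)
  (X Y : set Z) :
  is_distance d ->
  X `|` Y = setT ->
  (X `&` Y) !=set0 ->
  (forall x y v, (X `\` (X `&` Y)) x -> (Y `\` (X `&` Y)) y -> (X `&` Y) v ->
     (d x v <= d x y)%E /\ (d y v <= d x y)%E) ->
  (forall x y, (X `\` (X `&` Y)) x -> (Y `\` (X `&` Y)) y ->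
     (diam d (X `&` Y) <= d x y)%E) ->
  forall r : R, 0 <= r ->
    @weak_equiv_incl R Z (VR d r X `|` VR d r Y) (VR d r setT).
Proof.
move=> [_ [dsym d0]] cov [a0 [a0X a0Y]] h1 h2 r r0.
have cover : forall z, X z \/ Y z by move=> z; have : (X `|` Y) z by rewrite cov.
have cx : forall x, XA X Y x -> (X `\` (X `&` Y)) x by move=> x [hx hy]; split => // [[]].
have cy : forall y, YA X Y y -> (Y `\` (X `&` Y)) y by move=> y [hy hx]; split => // [[]].
apply: (main_sec dsym d0 cover a0X a0Y) => //.
- move=> x y v hx hy vX vY; apply: h1; [exact: cx | exact: cy | by split].
- move=> x y v hx hy vX vY; apply: le_trans (h2 x y (cx x hx) (cy y hy)).
  apply: ereal_sup_ubound; exists v => //; exists a0 => //.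
Qed.
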